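(* Let $n\geq7$ and let $u,v$ be monomials such that $x_{n-1}u\in\mathcal A$ and $x_nv\in\mathcal C$. If $uv\in G(J(P_{n-2})^2)$, then $x_{n-1}x_nuv\in G(J(P_n)^2)$.
   Context: For $m\geq 1$, $P_m$ is the path graph on vertices $x_1,\ldots,x_m$ with edges $\{x_i,x_{i+1}\}$; $J(P_m)$ is its cover ideal (generated by $\prod_{x\in C}x$, $C$ a minimal vertex cover) and $G(I)$ denotes minimal monomial generators. The rooted list $\mathcal R(P_m)$: $\mathcal R(P_1)$ empty; $\mathcal R(P_2)=x_1,x_2$; $\mathcal R(P_3)=x_2,x_1x_3$; $\mathcal R(P_4)=x_1x_3,x_2x_3,x_2x_4$; for $m\geq5$, if $\mathcal R(P_{m-2})=u_1,\ldots,u_r$ and $\mathcal R(P_{m-3})=v_1,\ldots,v_s$, then $\mathcal R(P_m)=x_{m-1}u_1,\ldots,x_{m-1}u_r,x_mx_{m-2}v_1,\ldots,x_mx_{m-2}v_s$; it lists each element of $G(J(P_m))$ once. For $n\geq7$: $\mathcal A$ is the sublist of $\mathcal R(P_n)$ of elements divisible by $x_{n-1}x_{n-3}$ (equivalently $x_{n-1}x_{n-3}w$, $w\in\mathcal R(P_{n-4})$), and $\mathcal C$ is the sublist of elements divisible by $x_nx_{n-4}$ (equivalently $x_nx_{n-2}x_{n-4}w$, $w\in\mathcal R(P_{n-5})$). *)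

(* Defs.v *)
From mathcomp Require Import all_boot.
From Stdlib Require List.

Set Implicit Arguments.
Unset Strict Implicit.
Unset Printing Implicit Defensive.

(* A monomial in the variables x_1, x_2, ... is represented by its exponent
   function: [f i] is the exponent of x_i (index 0 is never used). *)
Definition mono := nat -> nat.

Definition mmul (f g : mono) : mono := fun i => f i + g i.

Definition var (i : nat) : mono := fun j => if j == i then 1 else 0.

Definition mdiv (f g : mono) : Prop := forall i, f i <= g i.
Definition meq (f g : mono) : Prop := forall i, f i = g i.

(* vertex covers of the path P_m on x_1..x_m (edges {x_i, x_{i+1}}) *)
Definition is_cover (m : nat) (C : nat -> bool) : Prop :=
  (forall i, C i -> 1 <= i <= m) /\
  (forall i, 1 <= i -> i < m -> C i || C i.+1).

Definition is_min_cover (m : nat) (C : nat -> bool) : Prop :=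
  is_cover m C /\
  forall D, is_cover m D -> (forall i, D i -> C i) -> forall i, C i -> D i.

Definition cover_mono (C : nat -> bool) : mono := fun i => nat_of_bool (C i).

(* f is in G(J(P_m)) : f = prod_{x in C} x, C a minimal vertex cover *)
Definition genJ (m : nat) (f : mono) : Prop :=
  exists C, is_min_cover m C /\ meq f (cover_mono C).

(* f lies in J(P_m)^2, which is generated by the products g1 g2 of generators *)
Definition inJ2 (m : nat) (f : mono) : Prop :=
  exists g1 g2, genJ m g1 /\ genJ m g2 /\ mdiv (mmul g1 g2) f.

Definition genJ2 (m : nat) (f : mono) : Prop :=
  inJ2 m f /\ forall g, inJ2 m g -> mdiv g f -> meq g f.

Fixpoint rooted (m : nat) : list mono :=
  match m with
  | 0 => nil
  | 1 => nil
  | 2 => var 1 :: var 2 :: nil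
  | 3 => var 2 :: mmul (var 1) (var 3) :: nil
  | 4 => mmul (var 1) (var 3) :: mmul (var 2) (var 3) :: mmul (var 2) (var 4) :: nil
  | S (S ((S k3) as k2)) =>
      List.map (mmul (var m.-1)) (rooted k2) ++
      List.map (mmul (mmul (var m) (var m.-2))) (rooted k3)
  end.

(* membership in the sublist A of R(P_n): elements divisible by x_{n-1}x_{n-3} *)
Definition inA (n : nat) (f : mono) : Prop :=
  exists w, List.In w (rooted n) /\ mdiv (mmul (var n.-1) (var (n - 3))) w /\ meq f w.

(* membership in the sublist C of R(P_n): elements divisible by x_n x_{n-4} *)
Definition inC (n : nat) (f : mono) : Prop :=
  exists w, List.In w (rooted n) /\ mdiv (mmul (var n) (var (n - 4))) w /\ meq f w.

(* Main.v *)
Require Import Defs.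
From mathcomp Require Import all_boot zify.
From Stdlib Require Import Classical.

Fixpoint cnt (C : nat -> bool) (m : nat) : nat :=
  if m is k.+1 then cnt C k + C k.+1 else 0.

Lemma cnt_le (C D : nat -> bool) m : (forall i, D i -> C i) -> cnt D m <= cnt C m.
Proof.
move=> sub; elim: m => [|m IH] //=.
have : (D m.+1 : nat) <= C m.+1.
  by case E: (D m.+1) => //; rewrite (sub _ E).
lia.
Qed.

Lemma cnt_lt (C D : nat -> bool) m i0 : (forall i, D i -> C i) -> D i0 = false -> C i0 ->
  1 <= i0 <= m -> cnt D m < cnt C m.
Proof.
move=> sub Di Ci; elim: m => [|m IH] /=; first lia.
move=> Hi.
have : (D m.+1 : nat) <= C m.+1.
  by case E: (D m.+1) => //; rewrite (sub _ E).
have Hle := @cnt_le C D m sub.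
case: (eqVneq i0 m.+1) => [E|E].
  by subst i0; rewrite Di Ci; lia.
have : 1 <= i0 <= m by move: E; lia.
move/IH; lia.
Qed.

Lemma exists_min m (C : nat -> bool) : is_cover m C ->
  exists D, is_min_cover m D /\ (forall i, D i -> C i).
Proof.
suff : forall k C, cnt C m < k -> is_cover m C ->
  exists D, is_min_cover m D /\ (forall i, D i -> C i).
  by move=> H; apply: (H (cnt C m).+1).
elim=> [|k IH] {}C Hk HC; first lia.
have [Hmin|Hnot] := classic (is_min_cover m C).
  by exists C.
have : exists D, ~ (is_cover m D -> (forall i, D i -> C i) -> forall i, C i -> D i).
  apply: not_all_ex_not => Hall; apply: Hnot; split => //.
case=> D H1.
have [HD H2] := imply_to_and _ _ H1.
have [sub H3] := imply_to_and _ _ H2.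
have [i H4] := not_all_ex_not _ _ H3.
have [Ci nDi] := imply_to_and _ _ H4.
have Di : D i = false by apply/negP.
have Hi := HC.1 i Ci.
have lt := @cnt_lt C D m i sub Di Ci Hi.
have [E [HE sE]] := IH D ltac:(lia) HD.
exists E; split => // j /sE; exact: sub.
Qed.

Lemma rooted_rec k : rooted k.+4.+1 =
  List.map (mmul (var k.+4)) (rooted k.+3) ++
  List.map (mmul (mmul (var k.+4.+1) (var k.+3))) (rooted k.+2).
Proof. by []. Qed.

Lemma var_out j i : j < i -> var j i = 0.
Proof. by rewrite /var; case: eqP => //; lia. Qed.

Lemma rooted_supp m r : List.In r (rooted m) -> forall i, m < i -> r i = 0.
Proof.
elim/ltn_ind: m r => m IH r.
case: m IH => [|[|[|[|[|k]]]]] IH.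
- by [].
- by [].
- by rewrite /=; case=> [<-|[<-|[]]] i Hi; rewrite var_out //; lia.
- by rewrite /=; case=> [<-|[<-|[]]] i Hi; rewrite /mmul ?var_out //; lia.
- by rewrite /=; case=> [<-|[<-|[<-|[]]]] i Hi; rewrite /mmul ?var_out //; lia.
rewrite rooted_rec => Hin i Hi.
case: (List.in_app_or _ _ _ Hin) => H;
  have [r' [Er Hr']] := proj1 (List.in_map_iff _ _ _) H; rewrite -Er /mmul ?var_out //; try lia;
  rewrite (IH _ _ r' Hr') //; lia.
Qed.

Lemma vpos n v : 7 <= n -> inC n (mmul (var n) v) -> 1 <= v (n - 2).
Proof.
move=> n7 [w [Hw [Hd He]]].
have [k Ek] : exists k, n = k.+4.+1 by exists (n - 5); lia.
subst n; rewrite rooted_rec in Hw.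
case: (List.in_app_or _ _ _ Hw) => H;
  have [r' [Er Hr']] := proj1 (List.in_map_iff _ _ _) H.
- have h1 : var k.+4 k.+4.+1 = 0 by rewrite var_out.
  have h2 : r' k.+4.+1 = 0 by apply: (@rooted_supp _ r' Hr').
  have h3 : var k.+4.+1 k.+4.+1 = 1 by rewrite /var eqxx.
  have := Hd k.+4.+1; rewrite -Er /mmul /= h1 h2 h3; lia.
- have h1 : var k.+4.+1 k.+3 = 0 by rewrite /var; case: eqP; lia.
  have h3 : var k.+3 k.+3 = 1 by rewrite /var eqxx.
  have -> : k.+4.+1 - 2 = k.+3 by lia.
  have := He k.+3; rewrite -Er /mmul /= h1 h3; lia.
Qed.

Lemma b2n_or (a b : bool) : (a || b : nat) <= a + b.
Proof. by case: a; case: b. Qed.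

Lemma var_b j i : var j i = (i == j).
Proof. by rewrite /var; case: eqP. Qed.

Lemma mem_help n (K1 K2 : nat -> bool) (f : mono) : 7 <= n ->
  is_min_cover (n - 2) K1 -> is_min_cover (n - 2) K2 -> K2 (n - 2) ->
  (forall i, K1 i + K2 i + var n.-1 i + var n i <= f i) -> inJ2 n f.
Proof.
move=> n7 [[D1 E1] _] [[D2 E2] _] K2n Hf.
pose C1 := fun i => K1 i || (i == n.-1).
pose C2 := fun i => K2 i || (i == n).
have HC1 : is_cover n C1.
  split.
    move=> i /orP [/D1|/eqP]; lia.
  move=> i Hi1 Hin; rewrite /C1.
  case: (ltnP i (n - 2)) => Hi.
    by case/orP: (E1 i Hi1 Hi) => ->; rewrite ?orbT.
  case: (eqVneq i (n - 2)) => Ei.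
    have -> : i.+1 == n.-1 by apply/eqP; lia.
    by rewrite !orbT.
  have -> : i == n.-1 by apply/eqP; lia.
  by rewrite !orbT.
have HC2 : is_cover n C2.
  split.
    move=> i /orP [/D2|/eqP]; lia.
  move=> i Hi1 Hin; rewrite /C2.
  case: (ltnP i (n - 2)) => Hi.
    by case/orP: (E2 i Hi1 Hi) => ->; rewrite ?orbT.
  case: (eqVneq i (n - 2)) => Ei.
    by subst i; rewrite K2n.
  have -> : i.+1 == n by apply/eqP; lia.
  by rewrite !orbT.
have [G1 [HG1 S1]] := @exists_min _ _ HC1.
have [G2 [HG2 S2]] := @exists_min _ _ HC2.
exists (cover_mono G1), (cover_mono G2); split; first by exists G1.
split; first by exists G2.
move=> i; rewrite /mmul /cover_mono.
have a1 : (G1 i : nat) <= C1 i by case E: (G1 i) => //; rewrite (S1 _ E).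
have a2 : (G2 i : nat) <= C2 i by case E: (G2 i) => //; rewrite (S2 _ E).
have b1 := b2n_or (K1 i) (i == n.-1).
have b2 := b2n_or (K2 i) (i == n).
have := Hf i; rewrite !var_b /C1 /C2 in a1 a2 *; lia.
Qed.

Lemma restr_cover n (H : nat -> bool) : is_cover n H ->
  is_cover (n - 2) (fun i => H i && (i <= n - 2)).
Proof.
move=> [D E]; split.
  by move=> i /andP [/D Hi Hle]; move: Hi Hle; lia.
move=> i Hi1 Hin; have := E i Hi1 ltac:(lia).
have -> : i <= n - 2 by lia.
have -> : i.+1 <= n - 2 by lia.
by rewrite ?andbT.
Qed.

Lemma Kout (K H : nat -> bool) m j : (forall i, (K i : nat) <= H i && (i <= m)) ->
  m < j -> K j = false.
Proof.
move=> a Hj; move: (a j); have -> : (j <= m) = false by apply/negbTE; rewrite -ltnNge.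
by rewrite andbF; case: (K j).
Qed.

Lemma min_help n (f uv : mono) : 7 <= n -> genJ2 (n - 2) uv ->
  (forall i, f i = var n.-1 i + var n i + uv i) ->
  forall g, inJ2 n g -> mdiv g f -> meq g f.
Proof.
move=> n7 [_ Hmin] Hf g [h1 [h2 [[H1 [[HC1 _] H1e]] [[H2 [[HC2 _] H2e]] Hd]]]] Hgf.
have [K1 [HK1 S1]] := @exists_min _ _ (@restr_cover n H1 HC1).
have [K2 [HK2 S2]] := @exists_min _ _ (@restr_cover n H2 HC2).
have h1e : forall i, h1 i = H1 i := H1e.
have h2e : forall i, h2 i = H2 i := H2e.
have a1 : forall i, (K1 i : nat) <= H1 i && (i <= n - 2).
  by move=> i; case E: (K1 i) => //; rewrite (S1 _ E).
have a2 : forall i, (K2 i : nat) <= H2 i && (i <= n - 2).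
  by move=> i; case E: (K2 i) => //; rewrite (S2 _ E).
have Huv : meq (mmul (cover_mono K1) (cover_mono K2)) uv.
  apply: Hmin.
    exists (cover_mono K1), (cover_mono K2); split; first by exists K1.
    by split; [exists K2 | move=> i].
  move=> i; rewrite /mmul /cover_mono.
  have := a1 i; have := a2 i; have := Hd i; have := Hgf i; rewrite Hf /mmul h1e h2e !var_b.
  case: (leqP i (n - 2)) => Hi; last by rewrite ?andbF; lia.
  have -> : (i == n.-1) = false by apply/eqP; lia.
  have -> : (i == n) = false by apply/eqP; lia.
  rewrite ?andbT; lia.
have fle : forall i, f i <= h1 i + h2 i.
  move=> i; rewrite Hf -Huv /mmul /cover_mono h1e h2e !var_b.
  have := a1 i; have := a2 i.
  case: (leqP i (n - 2)) => Hi.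
    have -> : (i == n.-1) = false by apply/eqP; lia.
    have -> : (i == n) = false by apply/eqP; lia.
    rewrite ?andbT; lia.
  rewrite ?andbF => b2 b1.
  have -> : K1 i = false by move: b1; case: (K1 i).
  have -> : K2 i = false by move: b2; case: (K2 i).
  have e1 := proj2 HC1 n.-1 ltac:(lia) ltac:(lia).
  have e2 := proj2 HC2 n.-1 ltac:(lia) ltac:(lia).
  have := Hd n.-1; have := Hgf n.-1; have := Hd n; have := Hgf n.
  rewrite !Hf /mmul !h1e !h2e !var_b.
  have En : n.-1.+1 = n by lia.
  rewrite En in e1 e2.
  rewrite !eqxx.
  have -> : (n == n.-1) = false by apply/eqP; lia.
  have -> : (n.-1 == n) = false by apply/eqP; lia.
  rewrite -!Huv /mmul /cover_mono.
  rewrite (@Kout K1 H1 (n - 2) _ a1 (_ : n - 2 < n)); last by lia.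
  rewrite (@Kout K2 H2 (n - 2) _ a2 (_ : n - 2 < n)); last by lia.
  rewrite (@Kout K1 H1 (n - 2) _ a1 (_ : n - 2 < n.-1)); last by lia.
  rewrite (@Kout K2 H2 (n - 2) _ a2 (_ : n - 2 < n.-1)); last by lia.
  case: (eqVneq i n.-1) => [->|ne1]; first by rewrite ?eqxx; move: e1 e2;
    case: (H1 n.-1); case: (H1 n); case: (H2 n.-1); case: (H2 n) => //=; lia.
  case: (eqVneq i n) => [->|ne2]; first by rewrite ?eqxx; move: e1 e2;
    case: (H1 n.-1); case: (H1 n); case: (H2 n.-1); case: (H2 n) => //=; lia.
  by [].
move=> i; have := Hd i; have := Hgf i; have := fle i; rewrite /mmul; lia.
Qed.

Theorem lemma3p12 (n : nat) (u v : mono) :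
  7 <= n ->
  inA n (mmul (var n.-1) u) ->
  inC n (mmul (var n) v) ->
  genJ2 (n - 2) (mmul u v) ->
  genJ2 n (mmul (mmul (var n.-1) (var n)) (mmul u v)).
Proof.
move=> n7 _ HC Hg.
have vp := @vpos n v n7 HC.
split; last first.
  by apply: (@min_help n _ (mmul u v) n7 Hg) => i.
have Hg' := Hg.
move: Hg' => [[g1 [g2 [[K1 [K1m K1e]] [[K2 [K2m K2e]] Hdiv]]]] Hmin].
have k1e : forall i, g1 i = K1 i := K1e.
have k2e : forall i, g2 i = K2 i := K2e.
have Huv : meq (mmul (cover_mono K1) (cover_mono K2)) (mmul u v).
  apply: Hmin.
    exists (cover_mono K1), (cover_mono K2); split; first by exists K1.
    by split; [exists K2 | move=> i].
  by move=> i; have := Hdiv i; rewrite /mmul k1e k2e.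
have := Huv (n - 2); rewrite /mmul /cover_mono => E.
have Hf : forall i, K1 i + K2 i + var n.-1 i + var n i <=
   mmul (mmul (var n.-1) (var n)) (mmul u v) i.
  by move=> i; have := Huv i; rewrite /mmul /cover_mono; lia.
case K2n: (K2 (n - 2)).
  exact: (@mem_help n K1 K2 _ n7 K1m K2m K2n Hf).
have K1n : K1 (n - 2) by move: E; rewrite K2n; case: (K1 (n - 2)) => //=; lia.
apply: (@mem_help n K2 K1 _ n7 K2m K1m K1n) => i; have := Hf i; rewrite /mmul; lia.
Qed.
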